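(* Let $\tau=t^{1/2}$ and $[2]_t=t^{1/2}+t^{-1/2}$. The infinite product $$\prod_{n\geq1}\frac{1}{(1+t^{-\frac12}qu^n)(1+t^{\frac12}q^{-1}u^n)(1+t^{\frac12}qu^n)(1+t^{-\frac12}q^{-1}u^n)(1-u^n)^{18}(1-tu^n)(1-t^{-1}u^n)}$$ can be written as $$\sum_{h=0}^\infty\sum_{g=0}^h n^h_g(t)\,\big(q^{-1}+[2]_t+q\big)^g u^h,$$ where each $n^h_g(t)\in\mathbb Q[\tau^{\pm1}]$ is a Laurent polynomial in $\tau$ invariant under $\tau\mapsto\tau^{-1}$.
   Context: The product is expanded as a formal power series in $u$ whose coefficients are Laurent polynomials in $q$ and $\tau=t^{1/2}$. *)

(* Defs.v *)
From HB Require Import structures.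
From mathcomp Require Import all_boot all_order all_algebra fraction.
Set Implicit Arguments. Unset Strict Implicit. Unset Printing Implicit Defensive.
Import Order.TTheory GRing.Theory Num.Theory.
Local Open Scope ring_scope.

(* Coefficient field: rational functions Q(tau, q), containing the
   Laurent polynomial ring Q[tau^{+-1}, q^{+-1}].  Inner variable = tau,
   outer variable = q. *)
Definition R2 : idomainType := {poly {poly rat}}.
Definition K : fieldType := {fraction R2}.

Definition tau : K := tofrac ((('X : {poly rat})%:P) : R2).
Definition qv : K := tofrac ('X : R2).
Definition tt : K := tau ^+ 2.

(* Formal power series in u over K, as coefficient sequences. *)
Definition fps := nat -> K.
Definition fps_one : fps := fun m => (m == 0)%:R.
Definition fps_mul (a b : fps) : fps :=
  fun m => \sum_(i < m.+1) a i * b (m - i)%N.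
Definition fps_prod (s : seq fps) : fps := foldr fps_mul fps_one s.

(* geom c n = 1 / (1 - c u^n) = sum_k c^k u^(n k), for n >= 1. *)
Definition geom (c : K) (n : nat) : fps :=
  fun m => if (n %| m)%N then c ^+ (m %/ n) else 0.

Definition factor (n : nat) : seq fps :=
  [:: geom (- (tau^-1 * qv)) n; geom (- (tau * qv^-1)) n;
      geom (- (tau * qv)) n; geom (- (tau^-1 * qv^-1)) n]
  ++ nseq 18 (geom 1 n) ++ [:: geom tt n; geom tt^-1 n].

(* Coefficient of u^h in the infinite product over n >= 1: factors with
   n > h are congruent to 1 mod u^(h+1), so it equals the coefficient of
   u^h in the finite product over 1 <= n <= h. *)
Definition prod_coef (h : nat) : K :=
  fps_prod (flatten [seq factor n | n <- iota 1 h]) h.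

(* Laurent polynomials in tau over Q: (p, k) represents tau^{-k} p(tau). *)
Definition laurent := ({poly rat} * nat)%type.
Definition leval (l : laurent) (x : K) : K :=
  x ^- l.2 * (map_poly ratr l.1).[x].
Definition lsym (l : laurent) : Prop := leval l tau = leval l tau^-1.

(* Main.v *)
Require Import Defs.
From HB Require Import structures.
From mathcomp Require Import all_boot all_order all_algebra fraction.
From mathcomp Require Import ring.
From Stdlib Require Import ClassicalEpsilon.
Import Order.TTheory GRing.Theory Num.Theory.
Local Open Scope ring_scope.

Lemma addl_aux (F : fieldType) (a b c d : F) : a != 0 -> b != 0 ->
  (a * b)^-1 * (c * b + d * a) = a^-1 * c + b^-1 * d.
Proof. move=> ha hb; field; by rewrite ha hb. Qed.
Lemma T_aux (F : fieldType) (x : F) : x != 0 -> (x ^+ 1)^-1 * (x ^+ 2 + 1) = x + x^-1.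
Proof. move=> hx; field; by rewrite hx. Qed.
Section Ab.
Variables (F : fieldType) (t q : F).
Hypotheses (ht : t != 0) (hq : q != 0).
Lemma e1_aux : t^-1 * q + t * q^-1 + t * q + t^-1 * q^-1 = (t + t^-1) * (q + q^-1).
Proof. field; by rewrite ht hq. Qed.
Lemma e2_aux : t^-1 * q * (t * q^-1) + t * q * (t^-1 * q^-1) +
    (t^-1 * q + t * q^-1) * (t * q + t^-1 * q^-1) = (q + q^-1) * (q + q^-1) + ((t + t^-1) * (t + t^-1) - 2%:R).
Proof. field; by rewrite ht hq. Qed.
Lemma e3_aux : t^-1 * q * (t * q^-1) * (t * q + t^-1 * q^-1) +
    t * q * (t^-1 * q^-1) * (t^-1 * q + t * q^-1) = (t + t^-1) * (q + q^-1).
Proof. field; by rewrite ht hq. Qed.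
Lemma e4_aux : t^-1 * q * (t * q^-1) * (t * q * (t^-1 * q^-1)) = 1.
Proof. field; by rewrite ht hq. Qed.
Lemma t1_aux : - (t ^+ 2 + (t ^+ 2)^-1) = - ((t + t^-1) * (t + t^-1) - 2%:R).
Proof. field; by rewrite ht. Qed.
Lemma t2_aux : t ^+ 2 * (t ^+ 2)^-1 = 1.
Proof. field; by rewrite ht. Qed.
End Ab.

Lemma quart_aux (R : comRingType) (a b c d Y : R) :
  (1 - (- a) * Y) * ((1 - (- b) * Y) * ((1 - (- c) * Y) * ((1 - (- d) * Y) * 1))) =
  1 + (a + b + c + d) * Y + (a * b + c * d + (a + b) * (c + d)) * Y ^+ 2
  + (a * b * (c + d) + c * d * (a + b)) * Y ^+ 3 + (a * b * (c * d)) * Y ^+ 4.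
Proof. ring. Qed.
Lemma quad_aux (R : comRingType) (a b Y : R) :
  (1 - a * Y) * ((1 - b * Y) * 1) = 1 + (- (a + b)) * Y + (a * b) * Y ^+ 2.
Proof. ring. Qed.

Definition emb : {rmorphism rat -> K} := (@tofrac R2) \o (@polyC {poly rat}) \o (@polyC rat).

Lemma ratr_emb (c : rat) : ratr c = emb c.
Proof.
have hd : (denq c)%:~R != 0 :> K.
  by rewrite -(rmorph_int emb) fmorph_eq0 intr_eq0 denq_neq0.
apply: (mulIf hd); rewrite /ratr mulfVK // -(rmorph_int emb) -rmorphM.
by rewrite -numqE rmorph_int.
Qed.

Lemma tau_neq0 : tau != 0.
Proof. by rewrite /tau tofrac_eq0 polyC_eq0 polyX_eq0. Qed.
Lemma qv_neq0 : qv != 0.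
Proof. by rewrite /qv tofrac_eq0 polyX_eq0. Qed.
Lemma taui_neq0 : tau^-1 != 0.
Proof. by rewrite invr_eq0 tau_neq0. Qed.

Lemma levalE l x : leval l x = x ^- l.2 * (map_poly emb l.1).[x].
Proof. by rewrite /leval (eq_map_poly ratr_emb). Qed.

Definition lmul (l1 l2 : laurent) : laurent := (l1.1 * l2.1, (l1.2 + l2.2)%N).
Definition ladd (l1 l2 : laurent) : laurent :=
  (l1.1 * 'X^(l2.2) + l2.1 * 'X^(l1.2), (l1.2 + l2.2)%N).
Definition lconst (c : rat) : laurent := (c%:P, 0%N).
Definition lT : laurent := ('X^2 + 1, 1%N).

Lemma leval_mul l1 l2 x : leval (lmul l1 l2) x = leval l1 x * leval l2 x.
Proof.
rewrite !levalE /= rmorphM hornerM exprD invfM.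
set a := _^-1; set b := _^-1; set c := _.[x]; set d := _.[x]. ring.
Qed.

Lemma leval_add l1 l2 x : x != 0 ->
  leval (ladd l1 l2) x = leval l1 x + leval l2 x.
Proof.
move=> hx; rewrite !levalE /= rmorphD !rmorphM /= !map_polyXn hornerD !hornerM !hornerXn exprD.
by apply: addl_aux; apply: expf_neq0.
Qed.

Lemma leval_const c x : leval (lconst c) x = emb c.
Proof. by rewrite levalE /= map_polyC hornerC expr0 invr1 mul1r. Qed.

Lemma leval_T x : x != 0 -> leval lT x = x + x^-1.
Proof.
move=> hx; rewrite levalE /= rmorphD rmorph1 /= map_polyXn hornerD hornerXn hornerC.
exact: T_aux.
Qed.

Definition Lsym (x : K) := exists l, lsym l /\ x = leval l tau.

Lemma Lsym_mul x y : Lsym x -> Lsym y -> Lsym (x * y).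
Proof.
move=> [l1 [s1 ->]] [l2 [s2 ->]]; exists (lmul l1 l2); split; last by rewrite leval_mul.
by rewrite /lsym !leval_mul s1 s2.
Qed.

Lemma Lsym_add x y : Lsym x -> Lsym y -> Lsym (x + y).
Proof.
move=> [l1 [s1 ->]] [l2 [s2 ->]]; exists (ladd l1 l2); split; last by rewrite (leval_add _ _ _ tau_neq0).
by rewrite /lsym (leval_add _ _ _ tau_neq0) (leval_add _ _ _ taui_neq0) s1 s2.
Qed.

Lemma Lsym_emb c : Lsym (emb c).
Proof. by exists (lconst c); rewrite /lsym !leval_const. Qed.

Lemma Lsym_T : Lsym (tau + tau^-1).
Proof.
exists lT; rewrite /lsym (leval_T _ tau_neq0) (leval_T _ taui_neq0) invrK addrC; by split.
Qed.

Lemma Lsym0 : Lsym 0. Proof. by rewrite -(rmorph0 emb); apply: Lsym_emb. Qed.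
Lemma Lsym1 : Lsym 1. Proof. by rewrite -(rmorph1 emb); apply: Lsym_emb. Qed.
Lemma Lsym_opp x : Lsym x -> Lsym (- x).
Proof.
move=> hx; rewrite -mulN1r; apply: Lsym_mul => //.
by rewrite -(rmorph1 emb) -rmorphN; apply: Lsym_emb.
Qed.
Lemma Lsym_nat (n : nat) : Lsym n%:R.
Proof. by rewrite -(rmorph_nat emb); apply: Lsym_emb. Qed.
Lemma Lsym_sum I (r : seq I) (P : pred I) F :
  (forall i, P i -> Lsym (F i)) -> Lsym (\sum_(i <- r | P i) F i).
Proof. move=> h; apply: big_ind => //; [exact: Lsym0 | exact: Lsym_add]. Qed.

From mathcomp Require Import zify.

Definition yv : K := qv^-1 + (tau + tau^-1) + qv.
Definition SP (m : nat) (x : K) :=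
  exists P : {poly K}, [/\ (size P <= m.+1)%N, (forall i, Lsym P`_i) & x = P.[yv]].

Lemma SP_le i j x : (i <= j)%N -> SP i x -> SP j x.
Proof. move=> hij [P [hs hc ->]]; exists P; split => //; lia. Qed.

Lemma SP_add m x z : SP m x -> SP m z -> SP m (x + z).
Proof.
move=> [P [hs hc ->]] [Q [hs' hc' ->]]; exists (P + Q); split.
- apply: leq_trans (size_add _ _) _; rewrite geq_max hs hs' //.
- by move=> i; rewrite coefD; apply: Lsym_add.
- by rewrite hornerD.
Qed.

Lemma SP_mul i j x z : SP i x -> SP j z -> SP (i + j) (x * z).
Proof.
move=> [P [hs hc ->]] [Q [hs' hc' ->]]; exists (P * Q); split.
- apply: leq_trans (size_mul_leq _ _) _; lia.
- by move=> k; rewrite coefM; apply: Lsym_sum => l _; apply: Lsym_mul.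
- by rewrite hornerM.
Qed.

Lemma SP_const c : Lsym c -> SP 0 c.
Proof.
move=> hc; exists c%:P; split.
- exact: size_polyC_leq1.
- by move=> i; rewrite coefC; case: (i == 0%N) => //; exact: Lsym0.
- by rewrite hornerC.
Qed.

Lemma SP_y : SP 1 yv.
Proof.
exists 'X; split.
- by rewrite size_polyX.
- by move=> i; rewrite coefX; exact: Lsym_nat.
- by rewrite hornerX.
Qed.

Lemma SP0 m : SP m 0.
Proof. apply: (@SP_le 0) => //; apply: SP_const; exact: Lsym0. Qed.

Lemma SP_opp m x : SP m x -> SP m (- x).
Proof.
move=> h; rewrite -mulN1r; apply: (@SP_mul 0 m) => //.
apply: SP_const; apply: Lsym_opp; exact: Lsym1.
Qed.

Lemma SP_sum m I (r : seq I) (P : pred I) F :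
  (forall i, P i -> SP m (F i)) -> SP m (\sum_(i <- r | P i) F i).
Proof. move=> h; apply: big_ind => //; [exact: SP0 | exact: SP_add]. Qed.

Definition trunc N (a : fps) : {poly K} := \poly_(i < N.+1) a i.

Lemma fps_prod_poly N s m : (m <= N)%N ->
  fps_prod s m = (\prod_(a <- s) trunc N a)`_m.
Proof.
elim: s m => [|a s IH] m hm /=; first by rewrite big_nil coef1.
rewrite big_cons coefM /fps_mul; apply: eq_bigr => i _.
rewrite coef_poly IH; last by lia.
have -> : (i < N.+1)%N by have := ltn_ord i; lia.
by [].
Qed.

Definition good N (p : {poly K}) := forall m, (m <= N)%N -> SP m p`_m.

Lemma good_mul N p r : good N p -> good N r -> good N (p * r).
Proof.
move=> hp hr m hm; rewrite coefM; apply: SP_sum => i _.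
have hi := ltn_ord i.
apply: (@SP_le (i + (m - i))); first lia.
apply: SP_mul; [apply: hp | apply: hr]; lia.
Qed.

Lemma good1 N : good N 1.
Proof. move=> m _; rewrite coef1; apply: (@SP_le 0) => //; apply: SP_const; exact: Lsym_nat. Qed.

Lemma good_add N p r : good N p -> good N r -> good N (p + r).
Proof. by move=> hp hr m hm; rewrite coefD; apply: SP_add; [apply: hp|apply: hr]. Qed.

Lemma good_prod N I (r : seq I) (P : pred I) F :
  (forall i, P i -> good N (F i)) -> good N (\prod_(i <- r | P i) F i).
Proof. move=> h; apply: big_ind => //; [exact: good1 | exact: good_mul]. Qed.

Lemma good_CXn N j k c : SP j c -> (j <= k)%N -> good N (c%:P * 'X^k).
Proof.
move=> hc hjk m hm; rewrite coefCM coefXn.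
case: eqP => [->|_]; last by rewrite mulr0; exact: SP0.
by rewrite mulr1; apply: SP_le hc.
Qed.

Lemma good_inv N F D : good N D -> D`_0 = 1 ->
  (forall m, (m <= N)%N -> (F * D)`_m = (m == 0)%:R) -> good N F.
Proof.
move=> gD D0 hFD; elim/ltn_ind => m IH hm.
have e := hFD m hm.
rewrite coefM big_ord_recr /= subnn D0 mulr1 in e.
have -> : F`_m = (m == 0)%:R - \sum_(i < m) F`_(widen_ord (leqnSn m) i) * D`_(m - widen_ord (leqnSn m) i).
  by rewrite -e [_ + F`_m]addrC addrK.
apply: SP_add; first by apply: (@SP_le 0) => //; apply: SP_const; exact: Lsym_nat.
apply: SP_opp; apply: SP_sum => i _ /=.
have hi := ltn_ord i.
apply: (@SP_le (i + (m - i))); first lia.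
apply: SP_mul; [apply: IH | apply: gD]; lia.
Qed.

Definition cong N (p r : {poly K}) := forall m, (m <= N)%N -> p`_m = r`_m.

Lemma cong_mul N p p' r r' : cong N p p' -> cong N r r' -> cong N (p * r) (p' * r').
Proof.
move=> hp hr m hm; rewrite !coefM; apply: eq_bigr => i _.
have hi := ltn_ord i.
rewrite hp ?hr //; lia.
Qed.

Lemma cong_prod N I (r : seq I) (P : pred I) F :
  (forall i, P i -> cong N (F i) 1) -> cong N (\prod_(i <- r | P i) F i) 1.
Proof.
move=> h; apply: (big_ind (fun p => cong N p 1)) => //.
move=> x z hx hz; rewrite -(mulr1 1); exact: cong_mul.
Qed.

Lemma cong_geom N c n : (0 < n)%N ->
  cong N (trunc N (geom c n) * (1 - c%:P * 'X^n)) 1.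
Proof.
move=> hn m hm.
rewrite mulrBr mulr1 coefB mulrCA coefCM coefMXn coef_poly coef1.
have -> : (m < N.+1)%N by lia.
rewrite /geom.
case: (ltnP m n) => hmn.
  case: (posnP m) => [->|hm0].
    by rewrite dvdn0 div0n expr0 mulr0 subr0.
  by rewrite gtnNdvd // mulr0 subr0.
have [k ek] : exists k, m = (k + n)%N by exists (m - n)%N; lia.
subst m.
rewrite addnK coef_poly (_ : (k < N.+1)%N); last by lia.
rewrite (_ : (k + n == 0)%N = false); last by lia.
rewrite dvdn_addl //.
case: ifP => hd; last by rewrite mulr0 subr0.
by rewrite divnDr // divnn hn addn1 exprS subrr.
Qed.

Definition cs : seq K :=
  [:: - (tau^-1 * qv); - (tau * qv^-1); - (tau * qv); - (tau^-1 * qv^-1)]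
  ++ nseq 18 1 ++ [:: tt; tt^-1].

Lemma factorE n : factor n = [seq geom c n | c <- cs].
Proof. by []. Qed.

Definition Dn n : {poly K} := \prod_(c <- cs) (1 - c%:P * 'X^n).

Lemma quart (a b c d : K) (Y : {poly K}) :
  \prod_(e <- [:: - a; - b; - c; - d]) (1 - e%:P * Y) =
  1 + (a + b + c + d)%:P * Y + (a * b + c * d + (a + b) * (c + d))%:P * Y ^+ 2
  + (a * b * (c + d) + c * d * (a + b))%:P * Y ^+ 3 + (a * b * (c * d))%:P * Y ^+ 4.
Proof. rewrite !big_cons big_nil !(rmorphD, rmorphN, rmorphM); exact: quart_aux. Qed.

Lemma quad (a b : K) (Y : {poly K}) :
  \prod_(e <- [:: a; b]) (1 - e%:P * Y) = 1 + (- (a + b))%:P * Y + (a * b)%:P * Y ^+ 2.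
Proof. rewrite !big_cons big_nil !(rmorphD, rmorphN, rmorphM); exact: quad_aux. Qed.

Definition TT : K := tau + tau^-1.
Definition QQ : K := qv + qv^-1.

Lemma SP_TT : SP 0 TT. Proof. apply: SP_const; exact: Lsym_T. Qed.
Lemma SP_QQ : SP 1 QQ.
Proof.
have -> : QQ = yv + - TT by rewrite /QQ /yv /TT; ring.
apply: SP_add; first exact: SP_y.
by apply: (@SP_le 0) => //; apply: SP_opp; exact: SP_TT.
Qed.

Lemma goodXn N j n c : SP j c -> (0 < n)%N -> good N (c%:P * ('X^n) ^+ j).
Proof. move=> hc hn; rewrite -exprM; apply: (@good_CXn N j _ c hc); rewrite leq_pmull //. Qed.

Lemma good_Dn N n : (0 < n)%N -> good N (Dn n).
Proof.
move=> hn; rewrite /Dn /cs !big_cat.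
have hT := tau_neq0; have hq := qv_neq0.
apply: good_mul; last apply: good_mul.
- rewrite quart.
  have e1 : tau^-1 * qv + tau * qv^-1 + tau * qv + tau^-1 * qv^-1 = TT * QQ.
    exact: e1_aux.
  have e2 : tau^-1 * qv * (tau * qv^-1) + tau * qv * (tau^-1 * qv^-1) +
    (tau^-1 * qv + tau * qv^-1) * (tau * qv + tau^-1 * qv^-1) = QQ * QQ + (TT * TT - 2%:R).
    exact: e2_aux.
  have e3 : tau^-1 * qv * (tau * qv^-1) * (tau * qv + tau^-1 * qv^-1) +
    tau * qv * (tau^-1 * qv^-1) * (tau^-1 * qv + tau * qv^-1) = TT * QQ.
    exact: e3_aux.
  have e4 : tau^-1 * qv * (tau * qv^-1) * (tau * qv * (tau^-1 * qv^-1)) = 1.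
    exact: e4_aux.
  have s1 : SP 1 (TT * QQ) by apply: (@SP_mul 0 1); [exact: SP_TT | exact: SP_QQ].
  rewrite e1 e2 e3 e4.
  apply: good_add; last by apply: (@goodXn N 4) => //; apply: (@SP_le 0) => //; apply: SP_const; exact: Lsym1.
  apply: good_add; last by apply: (@goodXn N 3) => //; apply: (@SP_le 1).
  apply: good_add; last first.
    apply: (@goodXn N 2) => //.
    apply: (@SP_add 2); first by apply: (@SP_mul 1 1); exact: SP_QQ.
    apply: (@SP_le 0) => //; apply: SP_add; first by apply: (@SP_mul 0 0); exact: SP_TT.
    apply: SP_opp; apply: SP_const; exact: Lsym_nat.
  apply: good_add; first exact: good1.
  by rewrite -(expr1 'X^n); apply: (@goodXn N 1).
- rewrite big_seq; apply: good_prod => c; rewrite mem_nseq => /andP [_ /eqP ->].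
  apply: good_add; first exact: good1.
  rewrite -mulNr -rmorphN; apply: (@good_CXn N 0) => //.
  apply: SP_const; apply: Lsym_opp; exact: Lsym1.
- rewrite quad.
  have e1 : - (tt + tt^-1) = - (TT * TT - 2%:R).
    exact: t1_aux.
  have e2 : tt * tt^-1 = 1 by exact: t2_aux.
  rewrite e1 e2.
  apply: good_add; last by apply: (@goodXn N 2) => //; apply: (@SP_le 0) => //; apply: SP_const; exact: Lsym1.
  apply: good_add; first exact: good1.
  rewrite -(expr1 'X^n); apply: (@goodXn N 1) => //.
  apply: (@SP_le 0) => //; apply: SP_opp; apply: SP_add; first by apply: (@SP_mul 0 0); exact: SP_TT.
  apply: SP_opp; apply: SP_const; exact: Lsym_nat.
Qed.

Lemma coef0_1 I (r : seq I) (Q : pred I) (G : I -> {poly K}) :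
  (forall i, Q i -> (G i)`_0 = 1) -> (\prod_(i <- r | Q i) G i)`_0 = 1.
Proof.
move=> h; apply: (big_ind (fun p : {poly K} => p`_0 = 1)) => //.
- by rewrite coef1.
- by move=> x z hx hz; rewrite coef0M hx hz mulr1.
Qed.

Lemma main_SP h : SP h (prod_coef h).
Proof.
set F := \prod_(a <- flatten [seq factor n | n <- iota 1 h]) trunc h a.
have eF : prod_coef h = F`_h by rewrite /prod_coef (@fps_prod_poly h _ h (leqnn h)).
set D := \prod_(n <- iota 1 h) Dn n.
have gD : good h D.
  by rewrite /D big_seq; apply: good_prod => n; rewrite mem_iota => /andP [hn _]; apply: good_Dn.
have D0 : D`_0 = 1.
  rewrite /D big_seq; apply: coef0_1 => //= n; rewrite mem_iota => /andP [hn _].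
  rewrite /Dn; apply: coef0_1 => // c _.
  rewrite coefB coef1 coefCM coefXn (_ : (0 == n)%N = false); last lia.
  by rewrite /= mulr0n mulr0 subr0.
have hFD : cong h (F * D) 1.
  rewrite /F big_flatten big_map /D -big_split big_seq; apply: cong_prod => n.
  rewrite mem_iota => /andP [hn _].
  rewrite factorE big_map /Dn -big_split; apply: cong_prod => c _; exact: cong_geom.
have gF : good h F.
  by apply: (@good_inv h F D gD D0) => m hm; rewrite hFD // coef1.
by rewrite eF; apply: gF.
Qed.

Theorem mainTheorem7 :
  exists n : nat -> nat -> laurent,
    (forall h g, lsym (n h g)) /\
    (forall h : nat,
       prod_coef h =
       \sum_(g < h.+1)
          leval (n h g) tau * (qv^-1 + (tau + tau^-1) + qv) ^+ g).
Proof.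
pose H h := constructive_indefinite_description _ (main_SP h).
have L h g : exists l, lsym l /\ (sval (H h))`_g = leval l tau.
  by case: (svalP (H h)) => _ hc _; apply: hc.
pose L' h g := constructive_indefinite_description _ (L h g).
exists (fun h g => sval (L' h g)); split.
  by move=> h g; case: (svalP (L' h g)).
move=> h; case: (svalP (H h)) => hs _ e; apply: (etrans e).
rewrite (horner_coef_wide _ hs); apply: eq_bigr => g _.
by case: (svalP (L' h g)) => _ e2; rewrite [in LHS]e2.
Qed.
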